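(* Let $i\in\{0,\dots,t-1\}$. There exists a subset $\mathcal X^*\subseteq\mathcal X$ of encoding items with total weight $w(\mathcal X^* )\le(3t-3i-2)\cdot B$ and total profit $p(\mathcal X^* )\ge(3t-3i-2)\cdot B+\left(\binom{t}{2}-\binom{i+1}{2}+\frac{i}{3}\right)\cdot 9nB$ if and only if the instance $\mathcal A_i$ has a solution, i.e., there exists $\mathcal A_i^*\subseteq\mathcal A_i$ with $|\mathcal A_i^*|=n$ and $\sum_{a\in\mathcal A_i^*}a=B_n$.
   Context: Let $n\ge1$, $B_n=\sum_{j=1}^{3n}(3n+1)^j$ and $\widetilde{\mathcal A}_n=\{(3n+1)^{j_1}+(3n+1)^{j_2}+(3n+1)^{j_3}: j_1,j_2,j_3\in\{1,\dots,3n\}\}$. Let $t$ be a power of two and, for each $i\in\{0,\dots,t-1\}$, let $\mathcal A_i=\{a^i_1,\dots,a^i_{3n}\}$ be a set of $3n$ integers from $\widetilde{\mathcal A}_n$ with $\sum_{j=1}^{3n}a^i_j=3B_n$. Let $X=3tnB_n$ and $B=B_n+nX$. For each $i\in\{0,\dots,t-1\}$ and $j\in\{1,\dots,3n\}$ there is an encoding item $x^i_j$ with weight $w(x^i_j)=X+a^i_j$ and profit $p(x^i_j)=X+a^i_j+3iB$; $\mathcal X$ is the set of all encoding items. For a set $\mathcal S$ of items, $w(\mathcal S)=\sum_{x\in\mathcal S}w(x)$ and $p(\mathcal S)=\sum_{x\in\mathcal S}p(x)$. *)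

(* Defs.v *)
From HB Require Import structures.
From mathcomp Require Import all_boot all_order all_algebra.
Set Implicit Arguments. Unset Strict Implicit. Unset Printing Implicit Defensive.

Definition Bn (n : nat) : nat := \sum_(1 <= j < (3 * n).+1) (3 * n + 1) ^ j.

Definition in_Atilde (n a : nat) : Prop :=
  exists j1 j2 j3 : nat,
    [/\ 1 <= j1 <= 3 * n, 1 <= j2 <= 3 * n, 1 <= j3 <= 3 * n &
        a = (3 * n + 1) ^ j1 + (3 * n + 1) ^ j2 + (3 * n + 1) ^ j3].

Definition Xc (t n : nat) : nat := 3 * t * n * Bn n.
Definition Bc (t n : nat) : nat := Bn n + n * Xc t n.

(* Encoding item x^i_j is represented by the index pair (i, j), j 0-based;
   a i j is a^i_{j+1}. *)
Definition item_weight t n (a : 'I_t -> 'I_(3 * n) -> nat)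
  (x : 'I_t * 'I_(3 * n)) : nat := Xc t n + a x.1 x.2.
Definition item_profit t n (a : 'I_t -> 'I_(3 * n) -> nat)
  (x : 'I_t * 'I_(3 * n)) : nat := Xc t n + a x.1 x.2 + 3 * x.1 * Bc t n.

Definition wS t n a (S : {set 'I_t * 'I_(3 * n)}) : nat :=
  \sum_(x in S) item_weight a x.
Definition pS t n a (S : {set 'I_t * 'I_(3 * n)}) : nat :=
  \sum_(x in S) item_profit a x.

Definition has_solution t n (a : 'I_t -> 'I_(3 * n) -> nat) (i : 'I_t) : Prop :=
  exists S : {set 'I_(3 * n)}, #|S| = n /\ \sum_(j in S) a i j = Bn n.

(* Main.v *)
Require Import Defs.
From HB Require Import structures.
From mathcomp Require Import all_boot all_order all_algebra.
From mathcomp Require Import zify ring.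
Import Order.TTheory GRing.Theory Num.Theory.
Set Implicit Arguments. Unset Strict Implicit. Unset Printing Implicit Defensive.

Lemma bin2_double k : 2 * 'C(k, 2) = k * (k - 1).
Proof.
elim: k => [|k IH]; first by [].
rewrite binS bin1 mulnDr IH. case: k {IH} => [|k] //. nia.
Qed.

Lemma sum_sub t i : \sum_(k < t) (k - i) = 'C(t - i, 2).
Proof.
elim: t => [|t IH]; first by rewrite big_ord0.
rewrite big_ord_recr /= IH.
case: (leqP i t) => h.
  by rewrite subSn // binS bin1.
have -> : t - i = 0 by lia.
by have -> : t.+1 - i = 0 by lia.
Qed.

Lemma cnt t i c : \sum_(k < t) (if i < k then c else 0) = (t - i.+1) * c.
Proof.
elim: t => [|t IH]; first by rewrite big_ord0.
rewrite big_ord_recr /= IH.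
case: (ltnP i t) => h; nia.
Qed.

Lemma sum_pairs t m (S : {set 'I_t * 'I_m}) (F : 'I_t -> 'I_m -> nat) :
  \sum_(x in S) F x.1 x.2 = \sum_(i0 < t) \sum_(j < m | (i0, j) \in S) F i0 j.
Proof. by rewrite pair_big_dep; apply: eq_bigl => -[x y]. Qed.

Definition mkS t m (i : 'I_t) (Si : {set 'I_m}) : {set 'I_t * 'I_m} :=
  [set x : 'I_t * 'I_m | (i < x.1) || ((x.1 == i) && (x.2 \in Si))].

Lemma sum_mkS t m (i : 'I_t) (Si : {set 'I_m}) (F : 'I_t -> 'I_m -> nat) :
  \sum_(x in mkS i Si) F x.1 x.2 =
  \sum_(i0 < t) (if i < i0 then \sum_(j < m) F i0 j else 0) + \sum_(j in Si) F i j.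
Proof.
rewrite sum_pairs (bigD1 i) //= [in RHS](bigD1 i) //= ltnn add0n addnC.
congr (_ + _); last by apply: eq_bigl => j; rewrite /mkS inE /= ltnn eqxx.
apply: eq_bigr => i0 hi0.
case: (ltnP i i0) => h.
  by apply: eq_bigl => j; rewrite /mkS inE /= h.
rewrite big_pred0 // => j; rewrite /mkS inE /= ltnNge h /=.
by rewrite (negbTE hi0).
Qed.

Lemma card_mkS t m (i : 'I_t) (Si : {set 'I_m}) :
  #|mkS i Si| = (t - i.+1) * m + #|Si|.
Proof.
rewrite -sum1_card -[#|Si|]sum1_card.
have := sum_mkS i Si (fun _ _ => 1). rewrite /= => ->.
congr (_ + _). rewrite -(cnt t i m). apply: eq_bigr => k _.
by rewrite sum_nat_const card_ord muln1.
Qed.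

Lemma wS_eq t n (a : 'I_t -> 'I_(3 * n) -> nat) S :
  wS a S = Xc t n * #|S| + \sum_(x in S) a x.1 x.2.
Proof. by rewrite /wS /item_weight big_split /= sum_nat_const mulnC. Qed.

Lemma pS_eq t n (a : 'I_t -> 'I_(3 * n) -> nat) S :
  pS a S = wS a S + 3 * Bc t n * \sum_(x in S) (x.1 : nat).
Proof.
rewrite /pS /wS /item_profit /item_weight big_split /= big_distrr /=.
congr (_ + _); apply: eq_bigr => x _; ring.
Qed.

Definition Phi t m (i : 'I_t) (S : {set 'I_t * 'I_m}) : nat :=
  \sum_x (if x \in S then i - x.1 else x.1 - i).

Lemma Phi_id t m (i : 'I_t) (S : {set 'I_t * 'I_m}) :
  \sum_(x in S) (x.1 : nat) + Phi i S = i * #|S| + m * 'C(t - i, 2).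
Proof.
rewrite -sum_sub big_distrr /=.
have -> : \sum_(i0 < t) m * (i0 - i) = \sum_(x : 'I_t * 'I_m) (x.1 - i).
  rewrite -(pair_bigA _ (fun (i0 : 'I_t) (j : 'I_m) => i0 - i)).
  by apply: eq_bigr => i0 _; rewrite sum_nat_const card_ord.
rewrite mulnC -sum_nat_const big_mkcond [in RHS]big_mkcond /Phi -!big_split /=.
apply: eq_bigr => x _; case: ifP => _; lia.
Qed.

Lemma Phi0 t m (i : 'I_t) (S : {set 'I_t * 'I_m}) :
  Phi i S = 0 -> S = mkS i [set j | (i, j) \in S].
Proof.
move/eqP; rewrite sum_nat_eq0 => /forallP H.
apply/setP => -[x y]; rewrite /mkS !inE /=.
have := H (x, y); rewrite /=.
case: (boolP ((x, y) \in S)) => hin /= /eqP h.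
  case: (ltnP i x) => // hix /=.
  have e : x = i by apply: val_inj; rewrite /=; lia.
  by subst x; rewrite eqxx hin.
have -> : (i < x) = false by lia.
case: eqP => //= e; by subst x; rewrite (negbTE hin).
Qed.

Lemma Phi_mkS t m (i : 'I_t) (Si : {set 'I_m}) : Phi i (mkS i Si) = 0.
Proof.
apply/eqP; rewrite sum_nat_eq0; apply/forallP => -[x y] /=.
rewrite /mkS inE /=; apply/eqP; case: (ltnP i x) => h /=; first lia.
case: (x =P i) => [e|ne] /=; last lia.
by case: (y \in Si); rewrite e subnn.
Qed.
Open Scope ring_scope.

Lemma conv1 (t i r w B : nat) : (t = i + r + 1)%N ->
  ((w%:R : rat) <= (3 * (t%:R : rat) - 3 * i%:R - 2) * B%:R)%R = (w <= (3*r+1)*B)%N :> bool.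
Proof.
move=> ->.
have -> : (3 * ((i + r + 1)%:R : rat) - 3 * i%:R - 2) = ((3*r+1)%:R).
  by rewrite !natrD ?natrM; ring.
by rewrite -natrM ler_nat.
Qed.

Lemma binid (t i r : nat) : (t = i + r + 1)%N -> 'C(t, 2) = ('C(i.+1, 2) + 'C(r + 1, 2) + i * r)%N.
Proof.
move=> ht.
have h1 := bin2_double t. have h2 := bin2_double i.+1. have h3 := bin2_double (r + 1).
rewrite ht addnK in h1. rewrite addnK in h3. rewrite subSS subn0 in h2.
rewrite ht. lia.
Qed.

Lemma conv2 (t i r n p B : nat) : (t = i + r + 1)%N ->
  ((p%:R : rat) >= (3 * (t%:R : rat) - 3 * i%:R - 2) * B%:R
          + (('C(t, 2))%:R - ('C(i.+1, 2))%:R + i%:R / 3)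
            * (9 * (n%:R : rat) * B%:R))%R
  = ((3*r+1)*B + 3 * B * (n * 'C(r + 1, 2) * 3 + i * ((3*r+1) * n)) <= p)%N :> bool.
Proof.
move=> ht; rewrite (binid ht) ht.
rewrite -(ler_nat rat); congr (_ <= _)%R.
rewrite !natrD !natrM /=; by field.
Qed.

Close Scope ring_scope.

Unset Implicit Arguments.

Theorem lemma3 (n t : nat) (a : 'I_t -> 'I_(3 * n) -> nat) (i : 'I_t) :
  1 <= n ->
  (exists k, t = 2 ^ k) ->
  (forall i0 : 'I_t, injective (a i0)) ->
  (forall i0 j, in_Atilde n (a i0 j)) ->
  (forall i0 : 'I_t, \sum_(j < 3 * n) a i0 j = 3 * Bn n) ->
  (exists XS : {set 'I_t * 'I_(3 * n)},
      ((wS a XS)%:R <= (3 * (t%:R : rat) - 3 * (i : nat)%:R - 2) * (Bc t n)%:R)%R /\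
      ((pS a XS)%:R >= (3 * (t%:R : rat) - 3 * (i : nat)%:R - 2) * (Bc t n)%:R
          + (('C(t, 2))%:R - ('C(i.+1, 2))%:R + (i : nat)%:R / 3)
            * (9 * (n%:R : rat) * (Bc t n)%:R))%R)
  <-> has_solution a i.
Proof.
move=> hn _ _ _ hsum.
have [r ht] : exists r, t = (i + r + 1)%N by exists (t - i.+1); have := ltn_ord i; lia.
have htr : t - i.+1 = r by lia.
have hti : t - i = r + 1 by lia.
have hb : 0 < Bn n.
  by rewrite /Bn big_ltn; [rewrite expn1; lia | lia].
have hXdef : Xc t n = 3 * t * n * Bn n by [].
have hBdef : Bc t n = Bn n + n * Xc t n by [].
have htot : \sum_(x : 'I_t * 'I_(3*n)) a x.1 x.2 = t * (3 * Bn n).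
  rewrite -(pair_bigA _ (fun i0 j => a i0 j)) /=.
  under eq_bigr do rewrite hsum.
  by rewrite sum_nat_const card_ord.
have hAX : t * (3 * Bn n) <= Xc t n by rewrite hXdef; nia.
have hmb : (3 * r + 1) * Bn n < Xc t n by rewrite hXdef; nia.
have hmkA : forall Si : {set 'I_(3 * n)},
    \sum_(x in mkS i Si) a x.1 x.2 = r * (3 * Bn n) + \sum_(j in Si) a i j.
  move=> Si; rewrite sum_mkS; congr (_ + _).
  rewrite -htr -cnt; apply: eq_bigr => k _; by rewrite hsum.
have hPI : forall S : {set 'I_t * 'I_(3 * n)},
    \sum_(x in S) (x.1 : nat) + Phi i S = i * #|S| + 3 * n * 'C(r + 1, 2).
  by move=> S; rewrite Phi_id hti.
split.
- case=> XS []; rewrite (conv1 _ _ ht) (conv2 _ _ _ ht) => hw hp.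
  rewrite pS_eq in hp; rewrite wS_eq in hw hp.
  have hA : \sum_(x in XS) a x.1 x.2 <= t * (3 * Bn n).
    rewrite -htot big_mkcond /=; apply: leq_sum => x _; by case: ifP.
  have hI := hPI XS.
  move: hw hp hA hI.
  set k := #|XS|. set A := \sum_(x in XS) a x.1 x.2. set I := \sum_(x in XS) (x.1 : nat).
  set X := Xc t n in hAX hmb hBdef hXdef *. set B := Bc t n in hBdef *.
  set b := Bn n in hb hAX hmb hXdef hBdef *. set P := Phi i XS.
  set C := 'C(r + 1, 2). set m := 3 * r + 1 in hmb *.
  move=> hw hp hA hI.
  have hk : k <= m * n.
    rewrite leqNgt; apply/negP => hk.
    have : X * (m * n).+1 <= X * k by rewrite leq_mul2l hk orbT.
    rewrite hBdef in hw. nia.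
  have hB0 : 0 < B by rewrite hBdef; lia.
  have h2 : n * C * 3 + i * (m * n) <= I.
    rewrite -(leq_pmul2l (isT : 0 < 3)) -(leq_pmul2l hB0) !mulnA. lia.
  have hik : i * k <= i * (m * n) by rewrite leq_mul2l hk orbT.
  have hP0 : P = 0 by lia.
  have eik : i * k = i * (m * n) by lia.
  have eI : I = n * C * 3 + i * (m * n) by lia.
  rewrite eI in hp.
  have h4 : m * B <= X * k + A by lia.
  have ek : k = m * n.
    apply/eqP; rewrite eqn_leq hk /=; rewrite leqNgt; apply/negP => hk2.
    have : X * k.+1 <= X * (m * n) by rewrite leq_mul2l hk2 orbT.
    rewrite hBdef in h4. nia.
  have eA : A = m * b by rewrite ek hBdef in hw h4; nia.
  set Si := [set j | (i, j) \in XS].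
  have eS := Phi0 hP0.
  exists Si.
  have hc := card_mkS i Si. rewrite htr -eS -/k ek in hc.
  have hs := hmkA Si. rewrite -eS -/A eA in hs.
  split; lia.
- case=> Si [hc hs].
  exists (mkS i Si).
  rewrite (conv1 _ _ ht) (conv2 _ _ _ ht) pS_eq wS_eq card_mkS hmkA hc hs htr.
  have := hPI (mkS i Si). rewrite Phi_mkS addn0 card_mkS hc htr => ->.
  rewrite hBdef.
  split; nia.
Qed.
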